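(* If $T$ is convex, then an allocation $\mathbf X\in\mathcal A(\mathtt w)$ is Pareto optimal if and only if it is a full-insurance allocation, i.e., each $X_i$ is almost surely constant.
   Context: $(\Omega,\mathcal F,\mathbb P)$ is a nonatomic probability space, $\mathcal X\subset L^\infty(\Omega,\mathcal F,\mathbb P)$ a given collection of random variables, $n\ge2$ agents, aggregate endowment a constant $\mathtt w\in\mathbb R$, and $\mathcal A(\mathtt w):=\{(X_1,\ldots,X_n)\in\mathcal X^n:\sum_iX_i=\mathtt w\}$. Agent 1: $U_1(X)=\int u_1(X)\,d(T\circ\mathbb P)$ (Choquet integral); agents $i\ge2$: $U_i(X)=\int u_i(X)\,d\mathbb P$. Standing assumption: $T:[0,1]\to[0,1]$ twice differentiable, strictly increasing, $T(0)=0$, $T(1)=1$; each $u_i$ twice differentiable, strictly concave, increasing. $\mathbf X\in\mathcal A(\mathtt w)$ is Pareto optimal if there is no $\mathbf X'\in\mathcal A(\mathtt w)$ with $U_i(X_i')\ge U_i(X_i)$ for all $i$, with at least one strict inequality. *)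

(* Defs.v *)
From HB Require Import structures.
From mathcomp Require Import all_boot all_order all_algebra.
From mathcomp Require Import all_classical all_reals all_analysis.
Set Implicit Arguments. Unset Strict Implicit. Unset Printing Implicit Defensive.
Import Order.TTheory GRing.Theory Num.Theory.
Import numFieldNormedType.Exports.
Local Open Scope classical_set_scope.
Local Open Scope ring_scope.

Section Defs.
Context {d : measure_display} {Omega : measurableType d} {R : realType}.
Variable P : probability Omega R.

Definition nonatomic : Prop :=
  forall A : set Omega, measurable A -> (0 < P A)%E ->
    exists B : set Omega, [/\ measurable B, B `<=` A, (0 < P B)%E & (P B < P A)%E].

Definition in_Linfty (Y : Omega -> R) : Prop :=
  measurable_fun setT Y /\ exists M : R, {ae P, forall om, `|Y om| <= M}.

(* Choquet integral of f with respect to the distorted capacity T o P: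
   int_0^oo T(P(f > t)) dt - int_{-oo}^0 (1 - T(P(f > t))) dt *)
Definition choquet (T : R -> R) (f : Omega -> R) : R :=
  fine (\int[lebesgue_measure]_(t in `[0, +oo[%classic)
          (T (fine (P [set om | t < f om])))%:E)
  - fine (\int[lebesgue_measure]_(t in `]-oo, 0[%classic)
          (1 - T (fine (P [set om | t < f om])))%:E).

Definition expect (f : Omega -> R) : R := fine (\int[P]_om (f om)%:E).

(* agent utilities: agent 1 (index 0) is RDEU with distortion T,
   agents 2..n are expected-utility maximizers *)
Definition agent_util (n : nat) (T : R -> R) (u : 'I_n -> R -> R)
  (i : 'I_n) (Y : Omega -> R) : R :=
  if (val i == 0)%N then choquet T (u i \o Y) else expect (u i \o Y).

Definition feasible (Xs : set (Omega -> R)) (n : nat) (w : R)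
  (X : 'I_n -> Omega -> R) : Prop :=
  (forall i, Xs (X i)) /\ {ae P, forall om, \sum_(i < n) X i om = w}.

Definition pareto_optimal (Xs : set (Omega -> R)) (n : nat) (w : R)
  (T : R -> R) (u : 'I_n -> R -> R) (X : 'I_n -> Omega -> R) : Prop :=
  feasible Xs w X /\
  ~ (exists X' : 'I_n -> Omega -> R,
       [/\ feasible Xs w X',
           forall i, agent_util T u i (X i) <= agent_util T u i (X' i)
         & exists i, agent_util T u i (X i) < agent_util T u i (X' i)]).

Definition full_insurance (n : nat) (X : 'I_n -> Omega -> R) : Prop :=
  forall i, exists c : R, {ae P, forall om, X i om = c}.

End Defs.

Definition twice_diff {R : realType} (f : R -> R) : Prop :=
  forall x : R, derivable f x 1 /\ derivable (derive1 f) x 1.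

(* standing assumption on T (a T : [0,1] -> [0,1] is represented by any
   twice differentiable extension to R; only values on [0,1] matter) *)
Definition distortion_std {R : realType} (T : R -> R) : Prop :=
  [/\ twice_diff T,
      (forall x y : R, 0 <= x -> x < y -> y <= 1 -> T x < T y),
      T 0 = 0 & T 1 = 1].

Definition convex01 {R : realType} (T : R -> R) : Prop :=
  forall x y t : R, 0 <= x <= 1 -> 0 <= y <= 1 -> 0 <= t <= 1 ->
    T (t * x + (1 - t) * y) <= t * T x + (1 - t) * T y.

Definition utility_std {R : realType} (u : R -> R) : Prop :=
  [/\ twice_diff u,
      (forall x y t : R, x != y -> 0 < t < 1 ->
         t * u x + (1 - t) * u y < u (t * x + (1 - t) * y))
    & (forall x y : R, x <= y -> u x <= u y)].

(* Main.v *)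
Require Import Defs.
From HB Require Import structures.
From mathcomp Require Import all_boot all_order all_algebra.
From mathcomp Require Import all_classical all_reals all_analysis.
From mathcomp Require Import measurable_realfun.
From mathcomp Require Import ring lra.
Import Order.TTheory GRing.Theory Num.Theory.
Import numFieldNormedType.Exports. Import Num.Def.
Local Open Scope classical_set_scope.
Local Open Scope ring_scope.
Section Tangent.
Context {R : realType}.

Lemma tangent_weak (u : R -> R) (m y : R) :
  derivable u m 1 ->
  (forall x y t : R, x != y -> 0 < t < 1 ->
         t * u x + (1 - t) * u y < u (t * x + (1 - t) * y)) ->
  u y <= u m + 'D_1 u m * (y - m).
Proof.
move=> du cc.
pose q := fun h : R => h^-1 *: ((u \o shift m) (h *: 1) - u m).
have qE : forall h, q h = h^-1 * (u (h + m) - u m).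
  by move=> h; rewrite /q /= -[h%:A]/(h * 1) mulr1.
have cq : q @ 0^' --> 'D_1 u m by exact: du.
have [ym|ym|->] := ltgtP y m; last by rewrite subrr mulr0 addr0.
-
  have ql : q @ 0^'- --> 'D_1 u m.
    move=> A /cq /nbhs_ballP [_ /posnumP[e] H].
    exists e%:num => //= h he h0; apply: H => //; by rewrite lt_eqF.
  have : 'D_1 u m <= (u y - u m) / (y - m).
    apply: (cvgr_to_le ql).
    exists (m - y); first by rewrite /= subr_gt0.
    move=> h /= hb h0.
    rewrite /ball /= sub0r normrN ltr0_norm // in hb.
    rewrite qE.
    have ymn : y - m < 0 by rewrite subr_lt0.
    pose t := h / (y - m).
    have t01 : 0 < t < 1.
      apply/andP; split; first by rewrite /t ltr_ndivlMr // mul0r.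
      by rewrite /t ltr_ndivrMr // mul1r; lra.
    have := cc y m t (negbT (lt_eqF ym)) t01.
    have -> : t * y + (1 - t) * m = h + m.
      rewrite /t; field; by rewrite subr_eq0 lt_eqF.
    move=> hc.
    have : t * (u y - u m) <= u (h + m) - u m.
      by apply: ltW; nra.
    rewrite /t mulrAC => hh.
    apply: (le_trans (y := h^-1 * (h * (u y - u m) / (y - m)))).
      by rewrite ler_nM2l // invr_lt0.
    by rewrite !mulrA mulVf ?mul1r // lt_eqF.
  by rewrite -lerBlDl ler_ndivlMr // subr_lt0.
-
  have qr : q @ 0^'+ --> 'D_1 u m.
    move=> A /cq /nbhs_ballP [_ /posnumP[e] H].
    exists e%:num => //= h he h0; apply: H => //; by rewrite gt_eqF.
  have : (u y - u m) / (y - m) <= 'D_1 u m.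
    apply: (cvgr_to_ge qr).
    exists (y - m); first by rewrite /= subr_gt0.
    move=> h /= hb h0.
    rewrite /ball /= sub0r normrN gtr0_norm // in hb.
    rewrite qE.
    have ymn : 0 < y - m by rewrite subr_gt0.
    pose t := h / (y - m).
    have t01 : 0 < t < 1.
      apply/andP; split; first by rewrite /t divr_gt0.
      by rewrite /t ltr_pdivrMr // mul1r.
    have := cc y m t (negbT (gt_eqF ym)) t01.
    have -> : t * y + (1 - t) * m = h + m.
      rewrite /t; field; by rewrite subr_eq0 gt_eqF.
    move=> hc.
    have : t * (u y - u m) <= u (h + m) - u m.
      by apply: ltW; nra.
    rewrite /t mulrAC => hh.
    apply: (le_trans (y := h^-1 * (h * (u y - u m) / (y - m)))).
      by rewrite !mulrA mulVf ?mul1r // gt_eqF.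
    by rewrite ler_pM2l // invr_gt0.
  by rewrite -lerBlDl ler_pdivrMr // subr_gt0.
Qed.
Lemma tangent_strict (u : R -> R) (m y : R) :
  derivable u m 1 ->
  (forall x y t : R, x != y -> 0 < t < 1 ->
         t * u x + (1 - t) * u y < u (t * x + (1 - t) * y)) ->
  y != m -> u y < u m + 'D_1 u m * (y - m).
Proof.
move=> du cc ym.
have := @tangent_weak u m ((y + m) / 2) du cc.
have t01 : ((0:R) < 1/2) && (1/2 < 1 :> R) by apply/andP; split; lra.
have := cc y m (1/2) ym t01.
have -> : 1 / 2 * y + (1 - 1 / 2) * m = (y + m) / 2 by field.
set D := 'D_1 u m.
have -> : D * ((y + m) / 2 - m) = D * (y - m) / 2 by field.
lra.
Qed.

Lemma util_strict_mono (u : R -> R) (x y : R) :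
  (forall x y t : R, x != y -> 0 < t < 1 ->
         t * u x + (1 - t) * u y < u (t * x + (1 - t) * y)) ->
  (forall x y : R, x <= y -> u x <= u y) ->
  x < y -> u x < u y.
Proof.
move=> cc mono xy.
have t01 : ((0:R) < 1/2) && (1/2 < 1 :> R) by apply/andP; split; lra.
have := cc x y (1/2) (negbT (lt_eqF xy)) t01.
have := mono (1 / 2 * x + (1 - 1 / 2) * y) y.
have -> : 1 / 2 * x + (1 - 1 / 2) * y <= y by lra.
have := mono x y (ltW xy).
lra.
Qed.

End Tangent.
Section LC.
Context {d : measure_display} {Omega : measurableType d} {R : realType}.
Variable P : probability Omega R.
Local Open Scope ereal_scope.

Lemma mgt (f : Omega -> R) (t : R) : measurable_fun setT f ->
  measurable [set om | (t < f om)%R].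
Proof.
move=> mf; have := mf measurableT (`]t, +oo[%classic) (measurable_itv _).
rewrite setTI; congr measurable; apply/seteqP; split => x /=;
  by rewrite in_itv /= andbT.
Qed.

Lemma indic_eq {T1 T2 : Type} (A : set T1) (B : set T2) x y :
  (A x <-> B y) -> \1_A x = \1_B y :> R.
Proof.
move=> h; rewrite !indicE; have [Ax|nAx] := pselect (A x).
  by rewrite mem_set // mem_set //; apply/h.
by rewrite memNset // memNset // => /h.
Qed.

Lemma layer_pos (f : Omega -> R) : measurable_fun setT f ->
  \int[P]_om (maxr (f om) 0)%:E =
  \int[lebesgue_measure]_(t in `[0%R, +oo[%classic) P [set om | (t < f om)%R].
Proof.
move=> mf.
pose A := [set z : Omega * measurableTypeR R | (0 <= (z.2 : R))%R /\ ((z.2 : R) < f z.1)%R].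
have ms : measurable_fun setT (fun z : Omega * measurableTypeR R => (z.2 : R)).
  exact: measurable_snd.
have m2 : measurable [set z : Omega * measurableTypeR R | ((z.2 : R) < f z.1)%R].
  have := measurable_fun_ltr ms (measurableT_comp mf measurable_fst) measurableT (Y := [set true]) I.
  by rewrite setTI.
have mA : measurable A.
  have -> : A = [set z : Omega * measurableTypeR R | (0 <= (z.2 : R))%R] `&` [set z | ((z.2 : R) < f z.1)%R] by [].
  apply: measurableI => //.
  have := measurable_fun_ler (measurable_cst (0:R)%R) ms measurableT (Y := [set true]) I.
  by rewrite setTI.
have := @fubini_tonelli _ _ Omega _ R P lebesgue_measure (fun z => (\1_A z)%:E).
move=> H.
have {}H : \int[P]_x \int[lebesgue_measure]_y (\1_A (x, y))%:E =
    \int[lebesgue_measure]_y \int[P]_x (\1_A (x, y))%:E.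
  apply: H => [|z]; last by rewrite lee_fin.
  by apply/measurable_EFinP; exact: measurable_indic.
transitivity (\int[P]_x \int[lebesgue_measure]_y (\1_A (x, y))%:E).
  apply: eq_integral => om _.
  transitivity (\int[lebesgue_measure]_t (\1_(`[0%R, f om[%classic) t)%:E).
    rewrite integral_indic // setIT. apply: esym; apply: eq_trans (lebesgue_measure_itv `[0%R, f om[) _ => /=.
    rewrite lte_fin; case: ltP => h.
      by rewrite sube0; congr (_%:E); apply/max_idPl/ltW.
    by congr (_%:E); apply/max_idPr.
  apply: eq_integral => t _; congr (_%:E); apply: indic_eq => /=.
  by rewrite in_itv /=; split => [/andP[]|[-> ->]].
rewrite H // [RHS]integral_mkcond; apply: eq_integral => t _.
rewrite patchE; case: ifPn => t0.
  move/set_mem: t0; rewrite /= in_itv /= andbT => t0.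
  rewrite -(setIT [set om | (t < f om)%R]) -integral_indic //; last exact: mgt.
  apply: eq_integral => om _; congr (_%:E); apply: indic_eq => /=.
  by rewrite /A /=; split => [[]|].

have t0' : ~ (0 <= t)%R.
  by move=> h; move: t0; rewrite mem_set //= in_itv /= andbT.
rewrite integral0_eq //.
move=> om _; rewrite indicE memNset //= => -[h _].
by apply: t0'.
Qed.

Lemma mle (f : Omega -> R) (t : R) : measurable_fun setT f ->
  measurable [set om | (f om <= t)%R].
Proof.
move=> mf; have := mf measurableT (`]-oo, t]%classic) (measurable_itv _).
rewrite setTI; congr measurable; apply/seteqP; split => x /=;
  by rewrite in_itv /=.
Qed.

Lemma layer_neg (f : Omega -> R) : measurable_fun setT f ->
  \int[P]_om (maxr (- f om) 0)%:E =
  \int[lebesgue_measure]_(t in `]-oo, 0%R[%classic) P [set om | (f om <= t)%R].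
Proof.
move=> mf.
pose A := [set z : Omega * measurableTypeR R | ((z.2 : R) < 0)%R /\ (f z.1 <= (z.2 : R))%R].
have ms : measurable_fun setT (fun z : Omega * measurableTypeR R => (z.2 : R)).
  exact: measurable_snd.
have mA : measurable A.
  have -> : A = [set z : Omega * measurableTypeR R | ((z.2 : R) < 0)%R] `&` [set z | (f z.1 <= (z.2 : R))%R] by [].
  apply: measurableI => //.
    have := measurable_fun_ltr ms (measurable_cst (0:R)%R) measurableT (Y := [set true]) I.
    by rewrite setTI.
  have := measurable_fun_ler (measurableT_comp mf measurable_fst) ms measurableT (Y := [set true]) I.
  by rewrite setTI.
have := @fubini_tonelli _ _ Omega _ R P lebesgue_measure (fun z => (\1_A z)%:E).
move=> H.
have {}H : \int[P]_x \int[lebesgue_measure]_y (\1_A (x, y))%:E =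
    \int[lebesgue_measure]_y \int[P]_x (\1_A (x, y))%:E.
  apply: H => [|z]; last by rewrite lee_fin.
  by apply/measurable_EFinP; exact: measurable_indic.
transitivity (\int[P]_x \int[lebesgue_measure]_y (\1_A (x, y))%:E).
  apply: eq_integral => om _.
  transitivity (\int[lebesgue_measure]_t (\1_(`[f om, 0%R[%classic) t)%:E).
    rewrite integral_indic // setIT. apply: esym; apply: eq_trans (lebesgue_measure_itv `[f om, 0%R[) _ => /=.
    rewrite lte_fin; case: ltP => h.
      by rewrite add0e; congr (_%:E); apply/esym/max_idPl; rewrite oppr_ge0 ltW.
    by congr (_%:E); apply/esym/max_idPr; rewrite oppr_le0.
  apply: eq_integral => t _; congr (_%:E); apply: indic_eq => /=.
  by rewrite in_itv /=; split => [/andP[]|[-> ->]].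
rewrite H // [RHS]integral_mkcond; apply: eq_integral => t _.
rewrite patchE; case: ifPn => t0.
  move/set_mem: t0; rewrite /= in_itv /= => t0.
  rewrite -(setIT [set om | (f om <= t)%R]) -integral_indic //; last exact: mle.
  apply: eq_integral => om _; congr (_%:E); apply: indic_eq => /=.
  by rewrite /A /=; split => [[]|].
have t0' : ~ (t < 0)%R.
  by move=> h; move: t0; rewrite mem_set //= in_itv /=.
rewrite integral0_eq //.
move=> om _; rewrite indicE memNset //= => -[h _].
by apply: t0'.
Qed.

Lemma Pfin (A : set Omega) : measurable A -> P A = (fine (P A))%:E.
Proof. by move=> mA; rewrite fineK //; apply: fin_num_measure. Qed.

Lemma pos_eq (f : Omega -> R) : measurable_fun setT f ->
  \int[lebesgue_measure]_(t in `[0%R, +oo[%classic)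
     (fine (P [set om | (t < f om)%R]))%:E = \int[P]_om (EFin \o f)^\+ om.
Proof.
move=> mf.
rewrite funerpos (_ : \int[P]_om _ = \int[P]_om (maxr (f om) 0)%:E) //.
rewrite layer_pos //; apply: eq_integral => t _.
by rewrite -Pfin //; exact: mgt.
Qed.

Lemma neg_eq (f : Omega -> R) : measurable_fun setT f ->
  \int[lebesgue_measure]_(t in `]-oo, 0%R[%classic)
     (1 - fine (P [set om | (t < f om)%R]))%:E = \int[P]_om (EFin \o f)^\- om.
Proof.
move=> mf.
rewrite funerneg (_ : \int[P]_om _ = \int[P]_om (maxr (- f om) 0)%:E) //.
rewrite layer_neg //; apply: eq_integral => t _.
have -> : [set om | (f om <= t)%R] = ~` [set om | (t < f om)%R].
  by apply/seteqP; split => x /=; rewrite leNgt => /negP.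
rewrite probability_setC; last exact: mgt.
by rewrite EFinB -Pfin //; exact: mgt.
Qed.

Lemma choquet_id (f : Omega -> R) : measurable_fun setT f ->
  P.-integrable setT (EFin \o f) -> choquet P (fun p => p) f = expect P f.
Proof.
move=> mf fi; rewrite /choquet /expect.
rewrite pos_eq // neg_eq //.
have -> : \int[P]_om (f om)%:E =
   \int[P]_om (EFin \o f)^\+ om - \int[P]_om (EFin \o f)^\- om.
  exact: integralE.
rewrite [RHS]fineB //.
  by have := integrable_pos_fin_num measurableT fi.
by have := integrable_neg_fin_num measurableT fi.
Qed.

Lemma PsetT : (P : {measure set Omega -> \bar R}) [set: Omega] = 1.
Proof. exact: probability_setT. Qed.

Lemma int_bnd (g : Omega -> R) (K : R) : measurable_fun setT g ->
  {ae P, forall om, (`|g om| <= K)%R} -> P.-integrable setT (EFin \o g).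
Proof.
move=> mg hK; apply/integrableP; split; first exact/measurable_EFinP.
apply: (@le_lt_trans _ _ (\int[P]_om (cst `|K|%:E om))).
  apply: ae_ge0_le_integral => //.
  - by apply: measurableT_comp => //; exact/measurable_EFinP.
  - by move=> x _; rewrite lee_fin.
  - apply: filterS hK => om h _ /=; rewrite lee_fin (le_trans h) //.
    exact: ler_norm.
rewrite integral_cst //; apply: lte_mul_pinfty => //.
exact: le_lt_trans (probability_le1 P measurableT) (ltry 1).
Qed.

Lemma ae_const_expect (g : Omega -> R) (c : R) : measurable_fun setT g ->
  {ae P, forall om, g om = c} -> expect P g = c.
Proof.
move=> mg hc; rewrite /expect (ae_eq_integral (cst c%:E)) //.
- by rewrite integral_cst // PsetT mule1.
- exact/measurable_EFinP.
- apply: filterS hc => om h _; by rewrite /= h.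
Qed.

Lemma choquet_ae (T : R -> R) (f : Omega -> R) (c : R) :
  (T 0 = 0)%R -> (T 1 = 1)%R -> measurable_fun setT f ->
  {ae P, forall om, f om = c} -> choquet P T f = c.
Proof.
move=> T0 T1 mf hc.
have -> : choquet P T f = choquet P (fun p => p) f.
  have key : forall t, T (fine (P [set om | (t < f om)%R])) =
                       fine (P [set om | (t < f om)%R]).
    move=> t; case: (hc) => N [mN PN0 sub].
    have [tc|ct] := ltP t c.
      have -> : P [set om | (t < f om)%R] = 1.
        rewrite -(setCK [set om | (t < f om)%R]) probability_setC; last first.
          by apply: measurableC; exact: mgt.
        rewrite (@subset_measure0 _ _ _ P _ N) ?sube0 //.
          by apply: measurableC; exact: mgt.
        move=> om /= /negP; rewrite -leNgt => hle; apply: sub => /= e.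
        by move: hle; rewrite e leNgt tc.
      by rewrite /= T1.
    have -> : P [set om | (t < f om)%R] = 0.
      rewrite (@subset_measure0 _ _ _ P _ N) //; first exact: mgt.
      move=> om /= hlt; apply: sub => /= e.
      by move: hlt; rewrite e ltNge ct.
    by rewrite /= T0.
  rewrite /choquet; congr (fine _ - fine _)%R; apply: eq_integral => t _;
    by rewrite key.
rewrite choquet_id //; first exact: ae_const_expect.
apply: (@int_bnd _ `|c|) => //; apply: filterS hc => om ->; exact: lexx.
Qed.
Lemma choquet_le (T : R -> R) (f : Omega -> R) (K : R) :
  (forall p, 0 <= p <= 1 -> 0 <= T p <= p)%R ->
  (forall p q, 0 <= p -> p <= q -> q <= 1 -> T p <= T q)%R ->
  (T 1 = 1)%R ->
  measurable_fun setT f -> {ae P, forall om, (`|f om| <= K)%R} ->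
  (choquet P T f <= expect P f)%R.
Proof.
move=> hT Tmono T1 mf hK.
have fi := @int_bnd f K mf hK.
rewrite -choquet_id //.
pose h := fun t => fine (P [set om | (t < f om)%R]).
have h01 : forall t, (0 <= h t <= 1)%R.
  move=> t; rewrite /h; apply/andP; split.
    by apply: fine_ge0; exact: measure_ge0.
  rewrite -lee_fin -Pfin; last exact: mgt.
  by apply: probability_le1; exact: mgt.
have hni : {homo h : a b /~ (b <= a)%R}.
  move=> a b ba; rewrite /h; apply: fine_le.
  - by apply: fin_num_measure; exact: mgt.
  - by apply: fin_num_measure; exact: mgt.
  apply: le_measure; rewrite ?inE.
  - exact: mgt.
  - exact: mgt.
  by move=> om /=; apply: le_lt_trans.
have gni : {homo (fun t => T (h t)) : a b /~ (b <= a)%R}.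
  move=> a b ba; have /andP[? ?] := h01 a; have /andP[? ?] := h01 b.
  by apply: Tmono => //; exact: hni.
pose I1T := \int[lebesgue_measure]_(t in `[0%R, +oo[%classic) (T (h t))%:E.
pose I1 := \int[lebesgue_measure]_(t in `[0%R, +oo[%classic) (h t)%:E.
pose I2T := \int[lebesgue_measure]_(t in `]-oo, 0%R[%classic) (1 - T (h t))%:E.
pose I2 := \int[lebesgue_measure]_(t in `]-oo, 0%R[%classic) (1 - h t)%:E.
have -> : choquet P T f = (fine I1T - fine I2T)%R by [].
have -> : choquet P (fun p => p) f = (fine I1 - fine I2)%R by [].
have I1f : I1 \is a fin_num.
  rewrite /I1 /h pos_eq //; by have := integrable_pos_fin_num measurableT fi.
have I2f : I2 \is a fin_num.
  rewrite /I2 /h neg_eq //; by have := integrable_neg_fin_num measurableT fi.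
have I1Tle : I1T <= I1.
  apply: ge0_le_integral => //.
  - by move=> t _; rewrite lee_fin; have /hT/andP[? _] := h01 t.
  - by apply: (proj2 (measurable_EFinP _ _)); exact: nonincreasing_measurable.
  - by apply: (proj2 (measurable_EFinP _ _)); exact: nonincreasing_measurable.
  - by move=> t _; rewrite lee_fin; have /hT/andP[_ ?] := h01 t.
have I1T0 : 0 <= I1T.
  by apply: integral_ge0 => t _; rewrite lee_fin; have /hT/andP[? _] := h01 t.
have I1Tf : I1T \is a fin_num.
  rewrite ge0_fin_numE //; apply: (le_lt_trans I1Tle).
  by rewrite ltey_eq I1f.
have I2le : I2 <= I2T.
  apply: ge0_le_integral => //.
  - by move=> t _; rewrite lee_fin subr_ge0; case/andP: (h01 t).
  - apply: (proj2 (measurable_EFinP _ _)); apply: measurable_funB => //.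
    exact: nonincreasing_measurable.
  - apply: (proj2 (measurable_EFinP _ _)); apply: measurable_funB => //.
    exact: nonincreasing_measurable.
  - by move=> t _; rewrite lee_fin lerB //; have /hT/andP[_ ?] := h01 t.
have I2T0 : 0 <= I2T.
  apply: integral_ge0 => t _; rewrite lee_fin subr_ge0.
  have /andP[_ h1] := h01 t; have /hT/andP[_ ?] := h01 t.
  exact: le_trans h1.
have hone : forall t, (t < - `|K|)%R -> h t = 1%R.
  move=> t tK; rewrite /h.
  case: (hK) => N [mN PN0 sub].
  have -> : P [set om | (t < f om)%R] = 1.
    rewrite -(setCK [set om | (t < f om)%R]) probability_setC; last first.
      by apply: measurableC; exact: mgt.
    rewrite (@subset_measure0 _ _ _ P _ N) ?sube0 //.
      by apply: measurableC; exact: mgt.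
    move=> om /= /negP; rewrite -leNgt => hle; apply: sub => /= hk.
    move: hk; rewrite ler_norml => /andP[hk _].
    have : (- `|K| <= - K)%R by rewrite lerN2 ler_norm.
    lra.
  by [].
have LK : lebesgue_measure (`[(- `|K|)%R, 0%R[%classic : set (measurableTypeR R)) <= `|K|%:E.
  have := lebesgue_measure_itv `[(- `|K|)%R, 0%R[.
  move=> /= e; rewrite [X in X <= _]e.
  by case: ifP => _; rewrite ?add0e ?opprK // lee_fin.
have I2Tle : I2T <= `|K|%:E.
  apply: (le_trans (y := \int[lebesgue_measure]_(t in `]-oo, 0%R[%classic)
                      (\1_(`[(- `|K|)%R, 0%R[%classic) t)%:E)).
    apply: ge0_le_integral => //.
    - move=> t _; rewrite lee_fin subr_ge0.
      have /andP[_ h1] := h01 t; have /hT/andP[_ ?] := h01 t.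
      exact: le_trans h1.
    - apply: (proj2 (measurable_EFinP _ _)); apply: measurable_funB => //.
      exact: nonincreasing_measurable.
    - apply: (proj2 (measurable_EFinP _ _)); exact: measurable_indic.
    - move=> t; rewrite /= in_itv /= => t0.
      have [kt|tk] := leP (- `|K|)%R t.
        rewrite indicE mem_set /=; last by rewrite in_itv /= kt t0.
        rewrite lee_fin lerBlDr lerDl.
        by have /hT/andP[] := h01 t.
      by rewrite hone // T1 subrr lee_fin.
  rewrite integral_indic //.
  exact: le_trans (measureIl _ _ _) LK.
have I2Tf : I2T \is a fin_num.
  rewrite ge0_fin_numE //; exact: le_lt_trans I2Tle (ltry _).
apply: lerB; first exact: fine_le.
exact: fine_le.
Qed.

Lemma expectE (g : Omega -> R) : expect P g = Rintegral P setT g.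
Proof. by []. Qed.

Lemma ucont (u : R -> R) : twice_diff u -> continuous u.
Proof.
move=> td x; apply: differentiable_continuous; apply/derivable1_diffP.
exact: (td x).1.
Qed.

Lemma u_bnd (u : R -> R) (Y : Omega -> R) (M : R) :
  (forall x y : R, (x <= y)%R -> (u x <= u y)%R) ->
  {ae P, forall om, (`|Y om| <= M)%R} ->
  {ae P, forall om, (`|u (Y om)| <= `|u (- M)| + `|u M|)%R}.
Proof.
move=> mono hM; apply: filterS hM => om.
rewrite ler_norml => /andP[h1 h2].
have := mono _ _ h1; have := mono _ _ h2.
have := ler_norm (u M); have := ler_norm (- u (- M))%R; rewrite normrN.
have := normr_ge0 (u M); have := normr_ge0 (u (- M)%R).
move=> *; rewrite ler_norml; apply/andP; split; lra.
Qed.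

Lemma jensen (u : R -> R) (Y : Omega -> R) (M : R) :
  utility_std u -> measurable_fun setT Y -> {ae P, forall om, (`|Y om| <= M)%R} ->
  (expect P (u \o Y) <= u (expect P Y))%R /\
  (expect P (u \o Y) = u (expect P Y) -> exists c, {ae P, forall om, Y om = c}).
Proof.
case=> td cc mono mY hM.
have mu : measurable_fun setT u := continuous_measurable_fun (@ucont u td).
have muY : measurable_fun setT (u \o Y) := measurableT_comp mu mY.
have iY := @int_bnd Y M mY hM.
have iuY := @int_bnd (u \o Y) _ muY (@u_bnd u Y M mono hM).
set m := expect P Y.
set D := 'D_1 u m.
have dm : derivable u m 1 := (td m).1.
pose g1 := fun om => ((u m - D * m) + D * Y om)%R.
pose g := fun om => (g1 om - u (Y om))%R.
have g0 : forall om, (0 <= g om)%R.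
  move=> om; rewrite /g /g1 subr_ge0.
  have := @tangent_weak _ u m (Y om) dm cc; rewrite -/D; lra.
have mg1 : measurable_fun setT g1.
  apply: measurable_funD => //; apply: measurable_funM => //.
have ig1 : P.-integrable setT (EFin \o g1).
  apply: (@int_bnd g1 (`|u m - D * m| + `|D| * M)%R) => //.
  apply: filterS hM => om hY; rewrite /g1.
  apply: (le_trans (ler_normD _ _)); rewrite lerD2l normrM.
  by apply: ler_wpM2l.
have mg : measurable_fun setT g by apply: measurable_funB.
have Eg : expect P g = (u m - expect P (u \o Y))%R.
  rewrite !expectE /g RintegralB // /g1 RintegralD //; first last.
  - apply: (@int_bnd _ (`|D| * M)%R).
      by apply: measurable_funM => //; exact: measurable_cst.
    apply: filterS hM => om hY; rewrite normrM.
    by apply: ler_wpM2l.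
  - apply: (@int_bnd _ `|u m - D * m|%R); first exact: measurable_cst.
    by apply: filterS hM => om _; exact: lexx.
  rewrite Rintegral_cst // RintegralZl // PsetT /= mulr1.
  rewrite -expectE -/m; congr (_ - _)%R.
  by rewrite /= addrAC -addrA subrr addr0.
have Eg0 : (0 <= expect P g)%R.
  by rewrite expectE; apply: Rintegral_ge0 => om _; exact: g0.
split; first by move: Eg0; rewrite Eg subr_ge0.
move=> heq; exists m.
have : \int[P]_om `|(EFin \o g) om| = 0.
  have ig : P.-integrable setT (EFin \o g).
    apply: (@int_bnd g (`|u m - D * m| + `|D| * M + (`|u (- M)| + `|u M|))%R) => //.
    apply: filterS2 hM (@u_bnd u Y M mono hM) => om hY hu; rewrite /g.
    apply: (le_trans (ler_normB _ _)); apply: lerD => //.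
    apply: (le_trans (ler_normD _ _)); rewrite lerD2l normrM.
    by apply: ler_wpM2l.
  rewrite (eq_integral (EFin \o g)); last first.
    by move=> om _; apply: gee0_abs; rewrite /= lee_fin.
  move: Eg; rewrite heq subrr /expect => e.
  rewrite -[LHS]fineK ?e //.
  by have := integrable_fin_num measurableT ig.
move/(ae_eq_integral_abs P measurableT (proj2 (measurable_EFinP _ _) mg)).
apply: filterS => om /(_ I) /= /eqP; rewrite eqe => /eqP g0om.
apply/eqP; apply: contraT => ym.
have := @tangent_strict _ u m (Y om) dm cc ym; rewrite -/D.
move: g0om; rewrite /g /g1; lra.
Qed.

Lemma esum_w (n : nat) (X : 'I_n -> Omega -> R) (w : R) :
  (forall i, P.-integrable setT (EFin \o X i)) ->
  {ae P, forall om, (\sum_(i < n) X i om)%R = w} ->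
  (\sum_(i < n) expect P (X i))%R = w.
Proof.
move=> iX hw.
have isum : P.-integrable setT (fun om => \sum_(i < n) (EFin \o X i) om).
  by apply: (integrable_sum measurableT) => i _; exact: iX.
have msum : measurable_fun setT (fun om => (\sum_(i < n) X i om)%R).
  move/integrableP: isum => [+ _].
  rewrite (_ : (fun om => _) = EFin \o (fun om => (\sum_(i < n) X i om)%R)).
    by move/measurable_EFinP.
  by apply/funext => om; rewrite /= sumEFin.
rewrite -(@ae_const_expect _ w msum hw) /expect.
rewrite (eq_integral (fun om => \sum_(i < n) (EFin \o X i) om)); last first.
  by move=> om _; rewrite /= sumEFin.
rewrite (integral_sum measurableT iX) -sum_fine //.
by move=> i _; have := integrable_fin_num measurableT (iX i).
Qed.

Lemma umeas (u : R -> R) (Y : Omega -> R) : utility_std u ->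
  measurable_fun setT Y -> measurable_fun setT (u \o Y).
Proof.
case=> td _ _ mY; apply: measurableT_comp => //.
exact: continuous_measurable_fun (@ucont u td).
Qed.

Lemma au_le (n : nat) (T : R -> R) (u : 'I_n -> R -> R) (i : 'I_n)
  (Y : Omega -> R) (M : R) :
  (forall p, 0 <= p <= 1 -> 0 <= T p <= p)%R ->
  (forall p q, 0 <= p -> p <= q -> q <= 1 -> T p <= T q)%R ->
  (T 1 = 1)%R -> utility_std (u i) ->
  measurable_fun setT Y -> {ae P, forall om, (`|Y om| <= M)%R} ->
  (agent_util P T u i Y <= expect P (u i \o Y))%R.
Proof.
move=> hT Tmono T1 hu mY hM; rewrite /agent_util; case: ifP => _; last exact: lexx.
case: (hu) => td cc mono.
apply: (@choquet_le T (u i \o Y) (`|u i (- M)%R| + `|u i M|)%R) => //.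
  exact: umeas.
exact: (@u_bnd (u i) Y M mono hM).
Qed.

Lemma au_const (n : nat) (T : R -> R) (u : 'I_n -> R -> R) (i : 'I_n)
  (Y : Omega -> R) (c : R) :
  (T 0 = 0)%R -> (T 1 = 1)%R -> utility_std (u i) ->
  measurable_fun setT Y -> {ae P, forall om, Y om = c} ->
  agent_util P T u i Y = u i c.
Proof.
move=> T0 T1 hu mY hc.
have muY := @umeas (u i) Y hu mY.
have hc' : {ae P, forall om, (u i \o Y) om = u i c}.
  by apply: filterS hc => om /= ->.
rewrite /agent_util; case: ifP => _.
  exact: choquet_ae.
exact: ae_const_expect.
Qed.
End LC.

Theorem corollary3p8 (d : measure_display) (Omega : measurableType d)
  (R : realType) (P : probability Omega R) (Xs : set (Omega -> R))
  (n : nat) (w : R) (T : R -> R) (u : 'I_n -> R -> R) :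
  nonatomic P ->
  (forall Y, Xs Y -> in_Linfty P Y) ->
  (forall c : R, Xs (fun _ => c)) ->
  (2 <= n)%N ->
  distortion_std T ->
  (forall i, utility_std (u i)) ->
  convex01 T ->
  forall X : 'I_n -> Omega -> R, feasible P Xs w X ->
    (pareto_optimal P Xs w T u X <-> full_insurance P X).
Proof.
move=> _ hXs hcst _ [td Tsm T0 T1] hu hconv X hfeas.
have Tmono : forall p q, 0 <= p -> p <= q -> q <= 1 -> T p <= T q.
  move=> p q p0 pq q1; move: pq; rewrite le_eqVlt => /predU1P[-> //|pq].
  exact/ltW/Tsm.
have hT : forall p, 0 <= p <= 1 -> 0 <= T p <= p.
  move=> p /andP[p0 p1]; apply/andP; split.
    by rewrite -T0; apply: Tmono.
  have : T (p * 1 + (1 - p) * 0) <= p * T 1 + (1 - p) * T 0.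
    by apply: hconv; apply/andP; split => //; lra.
  by rewrite mulr1 mulr0 addr0 T1 T0 mulr0 addr0 mulr1.
have iX : forall Y, Xs Y -> P.-integrable setT (EFin \o Y).
  by move=> Y hY; case: (hXs Y hY) => mY [M hM]; exact: (@int_bnd _ _ _ P Y M).
have ub : forall i Y, Xs Y -> agent_util P T u i Y <= u i (expect P Y).
  move=> i Y hY; case: (hXs Y hY) => mY [M hM].
  apply: le_trans (@au_le _ _ _ P n T u i Y M hT Tmono T1 (hu i) mY hM) _.
  exact: (@jensen _ _ _ P (u i) Y M (hu i) mY hM).1.
have ucst : forall i c, agent_util P T u i (fun _ => c) = u i c.
  move=> i c; apply: (@au_const _ _ _ P n T u i (fun _ => c) c) => //.
  by apply: aeW.
split.
- case=> _ hPO i.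
  pose X' := fun j => fun _ : Omega => expect P (X j).
  have fe' : feasible P Xs w X'.
    split; first by move=> j; exact: hcst.
    apply: aeW => om; rewrite /X'.
    apply: esum_w; last exact: hfeas.2.
    by move=> j; apply: iX; exact: hfeas.1.
  have hge : forall j, agent_util P T u j (X' j) <= agent_util P T u j (X j).
    move=> j; rewrite leNgt; apply/negP => hlt; apply: hPO; exists X'; split => //.
      by move=> k; rewrite /X' ucst; exact: ub (hfeas.1 k).
    by exists j.
  case: (hXs _ (hfeas.1 i)) => mY [M hM].
  have [j1 j2] := @jensen _ _ _ P (u i) (X i) M (hu i) mY hM.
  apply: j2; apply/eqP; rewrite eq_le j1 /=.
  have := hge i; rewrite /X' ucst => h; apply: le_trans h _.
  exact: (@au_le _ _ _ P n T u i (X i) M hT Tmono T1 (hu i) mY hM).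
- move=> hFI; split => //; case=> X' [fe' hdom [i hstr]].
  case: (boolp.choice hFI) => c hc.
  have hX : forall j, agent_util P T u j (X j) = u j (c j).
    move=> j; case: (hXs _ (hfeas.1 j)) => mY _.
    exact: (@au_const _ _ _ P n T u j (X j) (c j)).
  have hEX : forall j, expect P (X j) = c j.
    move=> j; case: (hXs _ (hfeas.1 j)) => mY _.
    exact: (@ae_const_expect _ _ _ P (X j) (c j)).
  have sc : \sum_(j < n) c j = w.
    rewrite -(@esum_w _ _ _ P n X w) //; last exact: hfeas.2.
      by apply: eq_bigr => j _; rewrite hEX.
    by move=> j; apply: iX; exact: hfeas.1.
  have sX' : \sum_(j < n) expect P (X' j) = w.
    rewrite (@esum_w _ _ _ P n X' w) //; last exact: fe'.2.
    by move=> j; apply: iX; exact: fe'.1.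
  have cle : forall j, c j <= expect P (X' j).
    move=> j; rewrite leNgt; apply/negP => hlt.
    case: (hu j) => _ cc mono.
    have h1 := @util_strict_mono _ (u j) _ _ cc mono hlt.
    have h2 := hdom j; rewrite hX in h2.
    have h3 := ub j (X' j) (fe'.1 j).
    by move: (le_lt_trans (le_trans h2 h3) h1); rewrite ltxx.
  have eqs : forall j, expect P (X' j) - c j = 0.
    move=> j; apply: (@psumr_eq0P _ _ predT (fun j => expect P (X' j) - c j)) => //.
      by move=> k _; rewrite subr_ge0.
    by rewrite sumrB sX' sc subrr.
  have := eqs i; move/eqP; rewrite subr_eq0 => /eqP e.
  have := ub i (X' i) (fe'.1 i); rewrite e -(hX i) => h.
  by move: (lt_le_trans hstr h); rewrite ltxx.
Qed.
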